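(* Let $\mathcal{X}=\{1,\dots,n\}$, let $\pi$ be a strictly positive probability distribution on $\mathcal{X}$, let $P$ be a $\pi$-reversible transition matrix, and fix $\alpha\in(0,1)$. For $S\subset\mathcal{X}$ with $S\neq\emptyset,\mathcal{X}$, let $G_S$ be the Gibbs kernel induced by the partition $\mathcal{X}=S\sqcup S'$ and $A_\alpha(S)=\alpha P+(1-\alpha)G_S$. Then any symmetrised Cheeger cut of $P$ maximises $S\mapsto\|A_\alpha(S)-\Pi\|_{F,\pi}^2$, and $$\max_{S\neq\mathcal{X},\emptyset}\|A_\alpha(S)-\Pi\|_{F,\pi}^2=\alpha^2\operatorname{Tr}(P^2)-2\alpha(1-\alpha)\phi^*(P)+1-2\alpha^2.$$
   Context: $S'=\mathcal{X}\setminus S$. $\pi$-reversible means $\pi(x)P(x,y)=\pi(y)P(y,x)$. The Gibbs kernel of a partition is $G(x,y)=\pi(y)/\pi(\mathcal{O}(x))$ if $y\in\mathcal{O}(x)$ and $0$ otherwise ($\mathcal{O}(x)$ the block containing $x$). $\Pi$ is the matrix with every row equal to $\pi$; $\|M\|_{F,\pi}^2=\operatorname{Tr}(M^*M)$ with $M^*(x,y)=\pi(y)M(y,x)/\pi(x)$. The symmetrised Cheeger constant is $\phi^*(P)=\min_{S:\,0<\pi(S)<1}\frac{\sum_{x\in S,y\in S'}\pi(x)P(x,y)}{\pi(S)\pi(S')}$, and a symmetrised Cheeger cut is any $S$ attaining this minimum. *)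

(* Defs.v *)
From mathcomp Require Import all_boot all_order all_algebra.
From mathcomp Require Import boolp classical_sets reals.
Set Implicit Arguments. Unset Strict Implicit. Unset Printing Implicit Defensive.
Import Order.TTheory GRing.Theory Num.Theory.
Local Open Scope ring_scope.

Section Defs.
Variables (R : realType) (n : nat).
Implicit Types (pi : 'I_n -> R) (P M : 'M[R]_n) (S : {set 'I_n}).

Definition pos_distr pi := (forall x, 0 < pi x) /\ \sum_x pi x = 1.

Definition stochastic P :=
  (forall x y, 0 <= P x y) /\ (forall x, \sum_y P x y = 1).

Definition reversible pi P := forall x y, pi x * P x y = pi y * P y x.

Definition piS pi S := \sum_(x in S) pi x.

Definition gibbs_kernel pi (Q : {set {set 'I_n}}) : 'M[R]_n :=
  \matrix_(x, y) (if y \in finset.pblock Q x then pi y / piS pi (finset.pblock Q x) else 0).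

Definition G_S pi S := gibbs_kernel pi [set S; ~: S].

Definition A_alpha pi P (alpha : R) S := alpha *: P + (1 - alpha) *: G_S pi S.

Definition Pi_mx pi : 'M[R]_n := \matrix_(x, y) pi y.

Definition adj_pi pi M : 'M[R]_n := \matrix_(x, y) (pi y * M y x / pi x).

Definition frob2 pi M := \tr (adj_pi pi M *m M).

Definition cheeger_adm pi S := 0 < piS pi S < 1.

Definition cheeger_ratio pi P S :=
  (\sum_(x in S) \sum_(y in ~: S) pi x * P x y) / (piS pi S * piS pi (~: S)).

Definition phi_star pi P : R :=
  inf [set cheeger_ratio pi P S | S in [set S | cheeger_adm pi S]].

Definition sym_cheeger_cut pi P S :=
  cheeger_adm pi S /\ cheeger_ratio pi P S = phi_star pi P.

End Defs.

(* Main.v *)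
Require Import Defs.
From mathcomp Require Import all_boot all_order all_algebra.
From mathcomp Require Import boolp classical_sets reals.
From mathcomp Require Import ring lra.
Import Order.TTheory GRing.Theory Num.Theory.
Local Open Scope ring_scope.


Section Aux.
Variables (R : realType) (n : nat) (pi : 'I_n -> R) (P : 'M[R]_n).
Hypothesis pipos : forall x, 0 < pi x.
Hypothesis pisum : \sum_x pi x = 1.
Hypothesis Pge0 : forall x y, 0 <= P x y.
Hypothesis Psum : forall x, \sum_y P x y = 1.
Hypothesis Prev : reversible pi P.

Lemma pi_neq0 x : pi x != 0. Proof. by rewrite gt_eqF. Qed.

Lemma sum_split (F : 'I_n -> R) (S : {set 'I_n}) :
  \sum_x F x = \sum_(x in S) F x + \sum_(x in ~: S) F x.
Proof.
rewrite (bigID (fun x => x \in S)) /=; congr (_ + _).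
by apply: eq_bigl => x; rewrite finset.in_setC.
Qed.

Lemma piSC S : piS pi S + piS pi (~: S) = 1.
Proof. by rewrite /piS -sum_split. Qed.

Lemma piS_gt0 S : S != finset.set0 -> 0 < piS pi S.
Proof.
case/finset.set0Pn => x hx; rewrite /piS (bigD1 x) //=.
apply: (lt_le_trans (pipos x)); rewrite lerDl; apply: sumr_ge0 => i _.
exact: ltW.
Qed.

Lemma piSC_gt0 S : S != [set: 'I_n] -> 0 < piS pi (~: S).
Proof.
move=> hS; apply: piS_gt0; apply: contra hS => /eqP h.
by rewrite -(finset.setCK S) h finset.setC0.
Qed.

Definition blk (S : {set 'I_n}) x := if x \in S then S else ~: S.

Lemma pblock2 (S : {set 'I_n}) x : finset.pblock [set S; ~: S] x = blk S x.
Proof.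
rewrite /finset.pblock; case: pickP => [B /andP[HB HxB] | H] /=.
  move: HB; rewrite !inE => /orP[/eqP E|/eqP E]; subst B; rewrite /blk.
    by rewrite HxB.
  by move: HxB; rewrite inE => /negbTE ->.
move: (H S) (H (~: S)); rewrite !inE !eqxx /= orbT.
by case: (x \in S).
Qed.

Lemma blk_sym S x y : (y \in blk S x) = (x \in blk S y).
Proof.
rewrite /blk; case xS: (x \in S); case yS: (y \in S); by rewrite ?inE ?xS ?yS.
Qed.

Lemma blk_eq S x y : y \in blk S x -> blk S y = blk S x.
Proof.
rewrite /blk; case xS: (x \in S); case yS: (y \in S); by rewrite ?inE ?xS ?yS.
Qed.

Lemma blk_self S x : x \in blk S x.
Proof. by rewrite /blk; case xS: (x \in S); rewrite ?inE ?xS. Qed.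

Variable S : {set 'I_n}.
Hypothesis hS0 : S != finset.set0.
Hypothesis hST : S != [set: 'I_n].

Lemma blk_gt0 x : 0 < piS pi (blk S x).
Proof. by rewrite /blk; case: (x \in S); [apply: piS_gt0 | apply: piSC_gt0]. Qed.

Lemma blk_neq0 x : piS pi (blk S x) != 0.
Proof. by rewrite gt_eqF // blk_gt0. Qed.

Local Notation G := (G_S pi S).
Local Notation Pi := (Pi_mx pi).

Lemma G_SE x y : G x y = if y \in blk S x then pi y / piS pi (blk S x) else 0.
Proof. by rewrite /G_S /gibbs_kernel mxE pblock2. Qed.

Lemma G_col x y : G x y = if x \in blk S y then pi y / piS pi (blk S y) else 0.
Proof.
rewrite G_SE -blk_sym; case: ifP => // h.
by rewrite (@blk_eq S x y) // blk_sym.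
Qed.

Lemma G_row_eq x z y : z \in blk S x -> G z y = G x y.
Proof. by move=> h; rewrite !G_SE (@blk_eq S x z h). Qed.

Definition revm (M : 'M[R]_n) := forall x y, pi x * M x y = pi y * M y x.

Lemma revG : revm G.
Proof.
move=> x y; rewrite G_SE G_col; case: ifP => _; last by rewrite !mulr0.
by rewrite mulrCA.
Qed.

Lemma adj_self M : revm M -> adj_pi pi M = M.
Proof.
move=> H; apply/matrixP => x y; rewrite mxE -H mulrAC mulfV ?mul1r //.
exact: pi_neq0.
Qed.

Lemma PPi : P *m Pi = Pi.
Proof.
apply/matrixP => x y; rewrite !mxE (eq_bigr (fun z => P x z * pi y)).
  by rewrite -big_distrl /= Psum mul1r.
by move=> z _; rewrite mxE.
Qed.

Lemma PiP : Pi *m P = Pi.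
Proof.
apply/matrixP => x y; rewrite !mxE (eq_bigr (fun z => pi y * P y z)).
  by rewrite -big_distrr /= Psum mulr1.
by move=> z _; rewrite mxE Prev.
Qed.

Lemma PiPi : Pi *m Pi = Pi.
Proof.
apply/matrixP => x y; rewrite !mxE (eq_bigr (fun z => pi z * pi y)).
  by rewrite -big_distrl /= pisum mul1r.
by move=> z _; rewrite !mxE.
Qed.

Lemma GPi : G *m Pi = Pi.
Proof.
apply/matrixP => x y; rewrite [LHS]mxE (eq_bigr (fun z =>
   (if z \in blk S x then pi z * (piS pi (blk S x))^-1 else 0) * pi y)).
  rewrite -big_distrl /= -big_mkcond -big_distrl /= mulfV ?mul1r ?mxE //.
  exact: (blk_neq0 x).
by move=> z _; rewrite G_SE mxE.
Qed.

Lemma PiG : Pi *m G = Pi.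
Proof.
apply/matrixP => x y; rewrite [LHS]mxE (eq_bigr (fun z =>
   (if z \in blk S y then pi z * (pi y / (piS pi (blk S y))) else 0))).
  rewrite -big_mkcond -big_distrl /= mulrCA mulfV ?mulr1 ?mxE //.
  exact: (blk_neq0 y).
by move=> z _; rewrite G_col mxE; case: ifP; rewrite ?mulr0.
Qed.

Lemma GG : G *m G = G.
Proof.
apply/matrixP => x y; rewrite [LHS]mxE (eq_bigr (fun z =>
   (if z \in blk S x then pi z * (piS pi (blk S x))^-1 * G x y else 0))).
  rewrite -big_mkcond -!big_distrl /= mulfV ?mul1r ?mxE //.
  exact: (blk_neq0 x).
move=> z _; rewrite (G_SE x z); case: ifP => h; last by rewrite mul0r.
by rewrite (@G_row_eq x z y h) mxE.
Qed.

Lemma trPi : \tr Pi = 1.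
Proof. by rewrite /mxtrace -pisum; apply: eq_bigr => x _; rewrite mxE. Qed.

Lemma trG : \tr G = 2.
Proof.
rewrite /mxtrace (sum_split _ S).
rewrite (eq_bigr (fun x => pi x * (piS pi S)^-1)); last first.
  by move=> x hx; rewrite G_SE blk_self /blk hx.
rewrite [X in _ + X](eq_bigr (fun x => pi x * (piS pi (~: S))^-1)); last first.
  by move=> x; rewrite inE => hx; rewrite G_SE blk_self /blk (negbTE hx).
rewrite -!big_distrl /= !mulfV //; rewrite gt_eqF //.
  exact: piSC_gt0.
exact: piS_gt0.
Qed.

Lemma row_in (T : {set 'I_n}) x :
  \sum_(z in T) pi x * P x z = pi x - \sum_(z in ~: T) pi x * P x z.
Proof.
apply/eqP; rewrite eq_sym subr_eq -(sum_split (fun z => pi x * P x z) T).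
by rewrite -big_distrr /= Psum mulr1.
Qed.

Lemma blockT (T : {set 'I_n}) :
  \sum_(x in T) \sum_(z in T) pi x * P x z
  = piS pi T - \sum_(x in T) \sum_(z in ~: T) pi x * P x z.
Proof. rewrite /piS -sumrB; apply: eq_bigr => x _; exact: row_in. Qed.

Lemma crossC :
  \sum_(x in ~: S) \sum_(z in ~: ~: S) pi x * P x z
  = \sum_(x in S) \sum_(z in ~: S) pi x * P x z.
Proof.
rewrite finset.setCK exchange_big /=; apply: eq_bigr => x _.
by apply: eq_bigr => z _; rewrite Prev.
Qed.

Lemma PG_diag x :
  (P *m G) x x = (\sum_(z in blk S x) pi x * P x z) / piS pi (blk S x).
Proof.
rewrite mxE mulr_suml [RHS]big_mkcond /=; apply: eq_bigr => z _.
rewrite G_col; case: ifP => _; last by rewrite mulr0.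
by rewrite mulrA [P x z * pi x]mulrC.
Qed.

Lemma trPG : \tr (P *m G) = 2 - cheeger_ratio pi P S.
Proof.
rewrite /mxtrace (sum_split _ S).
rewrite (eq_bigr (fun x => (\sum_(z in S) pi x * P x z) / piS pi S)); last first.
  by move=> x hx; rewrite PG_diag /blk hx.
rewrite [X in _ + X](eq_bigr (fun x =>
   (\sum_(z in ~: S) pi x * P x z) / piS pi (~: S))); last first.
  by move=> x; rewrite inE => hx; rewrite PG_diag /blk (negbTE hx).
rewrite -!mulr_suml !blockT crossC /cheeger_ratio.
move: (@piS_gt0 S hS0) (@piSC_gt0 S hST) (piSC S).
set a := piS pi S; set b := piS pi (~: S).
set Q := \sum_(x in S) _ => ha hb hab.
have -> : b = 1 - a by rewrite -hab addrC addKr.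
have ha0 : a != 0 by rewrite gt_eqF.
have hb0 : 1 - a != 0 by rewrite -hab addrC addKr gt_eqF.
field.
by rewrite hb0 ha0.
Qed.

Lemma mulBPi (M N : 'M[R]_n) : M *m Pi = Pi -> Pi *m N = Pi ->
  (M - Pi) *m (N - Pi) = M *m N - Pi.
Proof.
move=> h1 h2; rewrite mulmxBl !mulmxBr h1 h2 PiPi subrr subr0 //.
Qed.

Lemma tr_sq2 a b (X Y : 'M[R]_n) :
  \tr ((a *: X + b *: Y) *m (a *: X + b *: Y))
  = a ^+ 2 * \tr (X *m X) + 2 * a * b * \tr (X *m Y) + b ^+ 2 * \tr (Y *m Y).
Proof.
rewrite mulmxDl !mulmxDr -!scalemxAl -!scalemxAr !mxtraceD !mxtraceZ.
rewrite (mxtrace_mulC Y X); ring.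
Qed.

Lemma entryE (M N : 'M[R]_n) a b x y :
  (a *: M + b *: N - Pi) x y = a * M x y + b * N x y - pi y.
Proof. by rewrite !mxE. Qed.

Lemma rev_AmPi alpha : revm (A_alpha pi P alpha S - Pi).
Proof.
move=> x y; rewrite /A_alpha !entryE.
transitivity (alpha * (pi x * P x y) + (1 - alpha) * (pi x * G x y) - pi x * pi y).
  by ring.
rewrite Prev revG; ring.
Qed.

Lemma A_decomp alpha :
  A_alpha pi P alpha S - Pi = alpha *: (P - Pi) + (1 - alpha) *: (G - Pi).
Proof.
rewrite /A_alpha !scalerBr addrACA -opprD -scalerDl.
have -> : alpha + (1 - alpha) = 1 by ring.
by rewrite scale1r.
Qed.

Lemma frob_formula alpha :
  frob2 pi (A_alpha pi P alpha S - Pi)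
  = alpha ^+ 2 * \tr (P *m P) - 2 * alpha * (1 - alpha) * cheeger_ratio pi P S
    + 1 - 2 * alpha ^+ 2.
Proof.
rewrite /frob2 adj_self; last exact: rev_AmPi.
rewrite A_decomp tr_sq2 (mulBPi _ _ PPi PiP) (mulBPi _ _ PPi PiG) (mulBPi _ _ GPi PiG) GG.
rewrite !linearB /= trPi trPG trG; ring.
Qed.
End Aux.

Theorem corollary4p6 (R : realType) (n : nat) (pi : 'I_n -> R) (P : 'M[R]_n)
    (alpha : R) :
  (1 < n)%N ->
  pos_distr pi -> stochastic P -> reversible pi P ->
  0 < alpha < 1 ->
  (forall S0, sym_cheeger_cut pi P S0 ->
     forall S : {set 'I_n}, S != finset.set0 -> S != [set: 'I_n] ->
       frob2 pi (A_alpha pi P alpha S - Pi_mx pi)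
       <= frob2 pi (A_alpha pi P alpha S0 - Pi_mx pi)) /\
  (exists S0 : {set 'I_n}, [/\ S0 != finset.set0, S0 != [set: 'I_n],
     (forall S : {set 'I_n}, S != finset.set0 -> S != [set: 'I_n] ->
        frob2 pi (A_alpha pi P alpha S - Pi_mx pi)
        <= frob2 pi (A_alpha pi P alpha S0 - Pi_mx pi)) &
     frob2 pi (A_alpha pi P alpha S0 - Pi_mx pi)
     = alpha ^+ 2 * \tr (P *m P) - 2 * alpha * (1 - alpha) * phi_star pi P
       + 1 - 2 * alpha ^+ 2]).

Proof.
move=> hn [pipos pisum] [Pge0 Psum] Prev /andP[a0 a1].
have key := @frob_formula R n pi P pipos pisum Psum Prev.
have piset0 : piS pi finset.set0 = 0 by rewrite /piS big_set0.
have adm_ok : forall S, cheeger_adm pi S ->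
    S != finset.set0 /\ S != [set: 'I_n].
  move=> S; rewrite /cheeger_adm => /andP[h0 h1]; split; apply/eqP => E.
    by move: h0; rewrite E piset0 ltxx.
  have := @piSC R n pi pisum S; rewrite E finset.setCT piset0 addr0 => E1.
  by move: h1; rewrite E E1 ltxx.
have ok_adm : forall S, S != finset.set0 -> S != [set: 'I_n] ->
    cheeger_adm pi S.
  move=> S h0 h1; rewrite /cheeger_adm (@piS_gt0 R n pi pipos S h0) /=.
  have := @piSC R n pi pisum S; have := @piSC_gt0 R n pi pipos S h1 => hp E.
  rewrite -E ltrDl //.
have r_ge0 : forall S, 0 <= cheeger_ratio pi P S.
  move=> S; apply: divr_ge0.
    apply: sumr_ge0 => x _; apply: sumr_ge0 => y _.
    by apply: mulr_ge0; [apply: ltW | apply: Pge0].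
  by apply: mulr_ge0; apply: sumr_ge0 => x _; apply: ltW.
have lb : has_lbound [set cheeger_ratio pi P S | S in [set S | cheeger_adm pi S]].
  by exists 0 => y [S _ <-].
have part1 : forall S0, sym_cheeger_cut pi P S0 ->
     forall S : {set 'I_n}, S != finset.set0 -> S != [set: 'I_n] ->
       frob2 pi (A_alpha pi P alpha S - Pi_mx pi)
       <= frob2 pi (A_alpha pi P alpha S0 - Pi_mx pi).
  move=> S0 [adm0 eq0] S h1 h2.
  have [h01 h02] := adm_ok S0 adm0.
  rewrite (key S h1 h2) (key S0 h01 h02).
  have hr : cheeger_ratio pi P S0 <= cheeger_ratio pi P S.
    rewrite eq0; apply: (ge_inf lb); exists S => //=; exact: ok_adm.
  have hk : 0 <= 2 * alpha * (1 - alpha).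
    by apply: mulr_ge0; [apply: mulr_ge0 => //; apply: ltW | rewrite subr_ge0 ltW].
  have := ler_wpM2l hk hr; lra.
split => //.
have n0 : (0 < n)%N by apply: ltnW.
pose x0 : 'I_n := Ordinal n0.
pose x1 : 'I_n := Ordinal hn.
have hS1a : [set x0] != finset.set0.
  by apply/finset.set0Pn; exists x0; rewrite inE.
have hS1b : [set x0] != [set: 'I_n].
  apply/eqP => E; have : x1 \in [set x0] by rewrite E inE.
  by rewrite inE => /eqP/(congr1 val).
have adm1 := ok_adm _ hS1a hS1b.
case: (@arg_minP _ _ _ [set x0] (fun S => cheeger_adm pi S)
         (fun S => cheeger_ratio pi P S) adm1) => S0 adm0 min0.
have cut0 : sym_cheeger_cut pi P S0.
  split => //; apply/eqP; rewrite eq_le; apply/andP; split.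
    apply: lb_le_inf.
      by exists (cheeger_ratio pi P S0); exists S0.
    by move=> y [S hS <-]; apply: min0.
  by apply: (ge_inf lb); exists S0.
have [h01 h02] := adm_ok S0 adm0.
exists S0; split => //; first exact: part1.
by rewrite (key S0 h01 h02); case: cut0 => _ ->.
Qed.
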